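(* Let $\mathbb{M}$ be a flow monoid with idempotent addition, and consider flow graphs whose edge functions are continuous, distributive and decreasing. Then: (a) for every such flow graph $h=(X,E,\mathit{in}_0)$, every inflow $\mathit{in}$, $y\in X$ and $z\in\mathbb{N}\setminus X$, $\mathsf{tf}(h)(\mathit{in})(y,z)=\sum_{x\in X}\sum_{p\in\mathrm{SPaths}_h(x\to(y,z))}E_p(\mathit{in}_x)$; (b) for such flow graphs $h_1,h_2$ with the same node set $X$, $\mathsf{tf}(h_1)=\mathsf{tf}(h_2)$ if and only if simple path replacement of $h_1$ by $h_2$ and of $h_2$ by $h_1$ both hold.
   Context: A flow monoid is a commutative monoid $(\mathbb{M},+,0)$ such that $n\le m :\iff \exists o.\ m=n+o$ is a partial order in which every ascending chain $K$ has a least upper bound $\bigsqcup K$, and $n+\bigsqcup K=\bigsqcup(n+K)$. Addition is idempotent if $m+m=m$. A function $f$ is continuous if it commutes with least upper bounds of ascending chains, distributive if $f(m+n)=f(m)+f(n)$ and $f(0)=0$, decreasing if $f(m)\le m$. Sums and $\le$ on functions are pointwise; empty sums are $0$. A flow graph is $h=(X,E,\mathit{in})$ with $X\subseteq\mathbb{N}$ finite, $E:X\times\mathbb{N}\to$ continuous functions $\mathbb{M}\to\mathbb{M}$, $\mathit{in}:(\mathbb{N}\setminus X)\times X\to\mathbb{M}$; $\mathit{in}_x=\sum_{y\notin X}\mathit{in}(y,x)$ (infinite sums as least upper bounds of finite partial sums); the flow is the least $\mathit{flow}:X\to\mathbb{M}$ with $\mathit{flow}(x)=\mathit{in}_x+\sum_{y\in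 X}E(y,x)(\mathit{flow}(y))$; outflow $\mathit{out}(x,y)=E(x,y)(\mathit{flow}(x))$. The transfer function $\mathsf{tf}(h)$ maps each inflow $\mathit{in}'$ to the outflow of $(X,E,\mathit{in}')$. A path through $h$ is $p=x_0\cdots x_nz$ with $x_i\in X$, $z\in\mathbb{N}\setminus X$; it is simple if $x_0,\dots,x_n$ are pairwise distinct. $\mathrm{SPaths}_h(x\to(y,z))$ is the set of simple paths with $x_0=x$, $x_n=y$, final element $z$. $E_p=E(x_n,z)\circ\cdots\circ E(x_0,x_1)$; $E_P=\sum_{q\in P}E_q$. $\mathrm{Out}(h_1,h_2)=\{x\in X\mid\exists z.\ h_1.E(x,z)\neq h_2.E(x,z)\}$. Simple path replacement of $h_1$ by $h_2$: for every $x\in\mathrm{Out}(h_1,h_2)$, $y\in X$, $z\in\mathbb{N}\setminus X$ and every $p\in\mathrm{SPaths}_{h_1}(x\to(y,z))$ there is $P\subseteq\mathrm{SPaths}_{h_2}(x\to(y,z))$ with $E_p\le E_P$. *)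

(* Defs.v *)
From mathcomp Require Import all_boot.
From mathcomp Require Import finmap.
From Stdlib Require Import ClassicalEpsilon.

Set Implicit Arguments.
Unset Strict Implicit.
Unset Printing Implicit Defensive.

Local Open Scope fset_scope.

Definition mle {T : Type} (add : T -> T -> T) (n m : T) : Prop :=
  exists o, m = add n o.

Definition is_chain {T : Type} (add : T -> T -> T) (k : nat -> T) : Prop :=
  forall i, mle add (k i) (k i.+1).

Definition is_lub {T : Type} (add : T -> T -> T) (k : nat -> T) (l : T) : Prop :=
  (forall i, mle add (k i) l) /\
  (forall u, (forall i, mle add (k i) u) -> mle add l u).

Record flowMonoid := FlowMonoid {
  fm_car :> Type;
  fm_add : fm_car -> fm_car -> fm_car;
  fm_zero : fm_car;
  fm_addA : forall a b c, fm_add a (fm_add b c) = fm_add (fm_add a b) c;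
  fm_addC : forall a b, fm_add a b = fm_add b a;
  fm_add0 : forall a, fm_add fm_zero a = a;
  (* <= is a partial order (reflexivity/transitivity are automatic) *)
  fm_le_antisym : forall a b, mle fm_add a b -> mle fm_add b a -> a = b;
  fm_chain_lub : forall k, is_chain fm_add k -> exists l, is_lub fm_add k l;
  fm_add_lub : forall n k l, is_chain fm_add k -> is_lub fm_add k l ->
                 is_lub fm_add (fun i => fm_add n (k i)) (fm_add n l)
}.

Section FlowDefs.
Variable M : flowMonoid.

Local Notation "a + b" := (fm_add a b).
Local Notation "0" := (fm_zero M).
Local Notation "a <= b" := (mle (@fm_add M) a b).

Definition idempotent_add : Prop := forall m : M, m + m = m.

Definition lub (k : nat -> M) : M :=
  epsilon (inhabits 0) (is_lub (@fm_add M) k).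

Definition msum {T : Type} (s : seq T) (F : T -> M) : M :=
  foldr (fun i acc => F i + acc) 0 s.

Definition continuous (f : M -> M) : Prop :=
  forall k l, is_chain (@fm_add M) k -> is_lub (@fm_add M) k l ->
    is_lub (@fm_add M) (fun i => f (k i)) (f l).

Definition distributive (f : M -> M) : Prop :=
  (forall m n, f (m + n) = f m + f n) /\ f 0 = 0.

Definition decreasing (f : M -> M) : Prop := forall m, f m <= m.

(* Flow graphs h = (X, E, in).                                          *)
(* X : finite set of nodes; E x z : M -> M the edge function (only     *)
(* meaningful for x \in X); an inflow is  inf : nat -> nat -> M, where  *)
(* inf y x is only meaningful for y \notin X, x \in X.                  *)

Definition good_edges (X : {fset nat}) (E : nat -> nat -> M -> M) : Prop :=
  forall x z, x \in X ->
    continuous (E x z) /\ distributive (E x z) /\ decreasing (E x z).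

(* in_x = sum_{y \notin X} in(y,x) : the lub of the finite partial sums *)
Definition inflow_at (X : {fset nat}) (inf : nat -> nat -> M) (x : nat) : M :=
  lub (fun n => msum [seq y <- iota 0 n | y \notin X] (fun y => inf y x)).

Definition is_flow (X : {fset nat}) (E : nat -> nat -> M -> M)
    (inx : nat -> M) (fl : nat -> M) : Prop :=
  forall x, x \in X -> fl x = inx x + msum X (fun y => E y x (fl y)).

Definition is_least_flow (X : {fset nat}) (E : nat -> nat -> M -> M)
    (inx : nat -> M) (fl : nat -> M) : Prop :=
  is_flow X E inx fl /\
  forall fl', is_flow X E inx fl' -> forall x, x \in X -> fl x <= fl' x.

Definition flow (X : {fset nat}) (E : nat -> nat -> M -> M) (inf : nat -> nat -> M)
    : nat -> M :=
  epsilon (inhabits (fun _ => 0)) (is_least_flow X E (inflow_at X inf)).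

Definition tf (X : {fset nat}) (E : nat -> nat -> M -> M) (inf : nat -> nat -> M)
    (x z : nat) : M :=
  E x z (flow X E inf x).

Definition tf_equal (X : {fset nat}) (E1 E2 : nat -> nat -> M -> M) : Prop :=
  forall inf y z, y \in X -> z \notin X -> tf X E1 inf y z = tf X E2 inf y z.

(* Paths. A path x_0 ... x_n z is represented by the node sequence     *)
(* [:: x_0; ...; x_n] together with the final element z.               *)

Fixpoint pathf_from (E : nat -> nat -> M -> M) (x : nat) (s : seq nat) (z : nat)
    : M -> M :=
  match s with
  | [::] => E x z
  | y :: s' => fun m => pathf_from E y s' z (E x y m)
  end.

Definition pathf (E : nat -> nat -> M -> M) (p : seq nat) (z : nat) : M -> M :=
  match p with
  | [::] => id
  | x :: s => pathf_from E x s z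
  end.

Definition is_spath (X : {fset nat}) (x y : nat) (p : seq nat) : bool :=
  [&& p != [::], uniq p, all (fun v => v \in X) p,
      head x p == x & last x p == y].

Fixpoint words (s : seq nat) (n : nat) : seq (seq nat) :=
  match n with
  | 0 => [:: [::]]
  | n'.+1 => [seq v :: w | v <- s, w <- words s n']
  end.

(* SPaths_h(x -> (y, z)) as a list (a simple path has at most #|X| nodes;
   it does not depend on z, which only occurs as the final element) *)
Definition spaths (X : {fset nat}) (x y : nat) : seq (seq nat) :=
  [seq p <- flatten [seq words X n | n <- iota 1 (size X)] | is_spath X x y p].

Definition Out (X : {fset nat}) (E1 E2 : nat -> nat -> M -> M) (x : nat) : Prop :=
  x \in X /\ exists z, E1 x z <> E2 x z.

Definition spr (X : {fset nat}) (E1 E2 : nat -> nat -> M -> M) : Prop :=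
  forall x y z, Out X E1 E2 x -> y \in X -> z \notin X ->
    forall p, is_spath X x y p ->
      exists P : seq (seq nat), all (is_spath X x y) P /\
        forall m, pathf E1 p z m <= msum P (fun q => pathf E2 q z m).
End FlowDefs.

(* Main.v *)
Require Import Defs.
From mathcomp Require Import all_boot.
From mathcomp Require Import finmap.
From Stdlib Require Import ClassicalEpsilon Classical.
Local Open Scope fset_scope.

Set Implicit Arguments.
Unset Strict Implicit.
Unset Printing Implicit Defensive.

Section Aux.
Variable M : flowMonoid.
Hypothesis Hidem : idempotent_add M.
Local Infix "⊕" := (@fm_add M) (at level 50, left associativity).
Local Infix "≼" := (mle (@fm_add M)) (at level 70).
Local Notation z0 := (fm_zero M).

Lemma addm0 (a : M) : a ⊕ z0 = a.
Proof. by rewrite fm_addC fm_add0. Qed.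

Lemma le_refl (a : M) : a ≼ a.
Proof. by exists z0; rewrite addm0. Qed.

Lemma le_trans (a b c : M) : a ≼ b -> b ≼ c -> a ≼ c.
Proof. move=> [o1 ->] [o2 ->]; exists (o1 ⊕ o2); by rewrite fm_addA. Qed.

Lemma le0 (a : M) : z0 ≼ a.
Proof. by exists a; rewrite fm_add0. Qed.

Lemma le_addr (a b : M) : a ≼ a ⊕ b.
Proof. by exists b. Qed.

Lemma le_addl (a b : M) : b ≼ a ⊕ b.
Proof. by exists a; rewrite fm_addC. Qed.

Lemma addACA (a b c d : M) : (a ⊕ b) ⊕ (c ⊕ d) = (a ⊕ c) ⊕ (b ⊕ d).
Proof.
rewrite -!fm_addA; congr (_ ⊕ _).
by rewrite !fm_addA (fm_addC b c).
Qed.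

Lemma le_join (a b c : M) : a ≼ c -> b ≼ c -> a ⊕ b ≼ c.
Proof.
move=> [o1 e1] [o2 e2]; exists (o1 ⊕ o2).
by rewrite -{1}(Hidem c) {1}e1 {1}e2 addACA.
Qed.

Lemma dist_mono (f : M -> M) a b : Defs.distributive f -> a ≼ b -> f a ≼ f b.
Proof. move=> [Hf _] [o ->]; exists (f o); by rewrite Hf. Qed.

Lemma dist_msum (f : M -> M) (T : Type) (s : seq T) (F : T -> M) : Defs.distributive f ->
  f (msum s F) = msum s (fun i => f (F i)).
Proof. move=> [Hf H0]; elim: s => //= i s IH; by rewrite Hf IH. Qed.

Lemma msum_le (T : eqType) (s : seq T) (F : T -> M) c :
  (forall i, i \in s -> F i ≼ c) -> msum s F ≼ c.
Proof.
elim: s => [|i s IH] H /=; first exact: le0.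
apply: le_join; first by apply: H; rewrite inE eqxx.
apply: IH => j Hj; apply: H; by rewrite inE Hj orbT.
Qed.

Lemma le_msum (T : eqType) (s : seq T) (F : T -> M) i : i \in s -> F i ≼ msum s F.
Proof.
elim: s => // j s IH; rewrite inE => /orP[/eqP ->|Hi] /=; first exact: le_addr.
exact: le_trans (IH Hi) (le_addl _ _).
Qed.

Lemma msum_sub (T : eqType) (s1 s2 : seq T) (F : T -> M) :
  {subset s1 <= s2} -> msum s1 F ≼ msum s2 F.
Proof. by move=> H; apply: msum_le => i Hi; apply: le_msum; apply: H. Qed.

Lemma msum_eq_in (T : eqType) (s : seq T) (F G : T -> M) :
  {in s, F =1 G} -> msum s F = msum s G.
Proof.
elim: s => //= i s IH H; rewrite H ?inE ?eqxx // IH // => j Hj.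
by apply: H; rewrite inE Hj orbT.
Qed.

Lemma lub_eq k l : is_lub (@fm_add M) k l -> lub k = l.
Proof.
move=> H; rewrite /lub.
have [H1 H2] := epsilon_spec (inhabits z0) (is_lub (@fm_add M) k) (ex_intro _ l H).
case: H => G1 G2; apply: fm_le_antisym; [exact: H2 | exact: G2].
Qed.


Lemma split_mem (x : nat) (u : seq nat) : x \in u -> exists a b, u = a ++ x :: b.
Proof. by case/splitPr => a b; exists a, b. Qed.

Section Graph.
Variable X : {fset nat}.
Variable E : nat -> nat -> M -> M.
Hypothesis HE : good_edges X E.
Local Notation inX s := (all (fun v => v \in X) s).

Fixpoint pathN (x : nat) (s : seq nat) : M -> M :=
  match s with
  | [::] => id
  | y :: s' => fun m => pathN y s' (E x y m)
  end.

Lemma E_dist x y : x \in X -> Defs.distributive (E x y).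
Proof. by move=> Hx; have [_ [H _]] := HE y Hx. Qed.

Lemma E_decr x y m : x \in X -> E x y m ≼ m.
Proof. by move=> Hx; have [_ [_ H]] := HE y Hx. Qed.

Lemma pathN_cat x s1 s2 m : pathN x (s1 ++ s2) m = pathN (last x s1) s2 (pathN x s1 m).
Proof. by elim: s1 x m => //= y s1 IH x m; rewrite IH. Qed.

Lemma pathN_rcons x s v m : pathN x (rcons s v) m = E (last x s) v (pathN x s m).
Proof. by rewrite -cats1 pathN_cat. Qed.

Lemma pathN_mono x s a b : inX (x :: s) -> a ≼ b -> pathN x s a ≼ pathN x s b.
Proof.
elim: s x a b => [|y s IH] x a b /= /andP[Hx Hs] Hab //.
by apply: IH => //; apply: dist_mono (E_dist _ Hx) Hab.
Qed.

Lemma pathN_decr x s m : inX (x :: s) -> pathN x s m ≼ m.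
Proof.
elim: s x m => [|y s IH] x m /= /andP[Hx Hs]; first exact: le_refl.
exact: le_trans (IH _ _ Hs) (E_decr _ _ Hx).
Qed.

Lemma pathN_zero x s : inX (x :: s) -> pathN x s z0 = z0.
Proof.
elim: s x => [|y s IH] x /= /andP[Hx Hs] //.
by have [_ ->] := E_dist y Hx; apply: IH.
Qed.

Lemma pathf_fromE x s z m : pathf_from E x s z m = E (last x s) z (pathN x s m).
Proof. by elim: s x m => //= y s IH x m. Qed.

Lemma shortcut x s : inX (x :: s) -> exists s', [/\ uniq (x :: s'), inX (x :: s'),
   last x s' = last x s & forall m, pathN x s m ≼ pathN x s' m].
Proof.
elim: s x => [|y t IH] x.
  move=> H; exists [::]; split => // m; exact: le_refl.
move=> /= /andP[Hx Hs].
have [t' [Hu Hi Hl Hle]] := IH y Hs.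
have Hi' : inX (x :: y :: t') by rewrite /= Hx.
case Hxin: (x \in y :: t').
  have [a [b Eab]] := split_mem Hxin.
  have Hab : inX (a ++ x :: b) by rewrite -Eab.
  move: (Hab); rewrite all_cat => /andP[Ha Hxb].
  exists b; split.
  - by move: Hu; rewrite Eab cat_uniq => /and3P[_ _].
  - by [].
  - by rewrite -Hl -[last y t']/(last x (y :: t')) Eab last_cat.
  - move=> m; apply: le_trans (Hle (E x y m)) _.
    rewrite -[pathN y t' _]/(pathN x (y :: t') m) Eab -cat_rcons pathN_cat last_rcons.
    apply: pathN_mono => //.
    apply: pathN_decr.
    by rewrite /= Hx all_rcons Ha; move: Hxb => /= /andP[-> _].
exists (y :: t'); split => //=.
by rewrite Hxin.
Qed.

Lemma mem_words (p : seq nat) : inX p -> p \in words X (size p).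
Proof.
elim: p => [|v p IH] //= /andP[Hv Hp].
by apply: (allpairs_f (fun a w => a :: w)) => //; apply: IH.
Qed.

Lemma spath_mem x y p : is_spath X x y p -> p \in spaths X x y.
Proof.
move=> H; rewrite /spaths mem_filter H /=.
move: H => /and5P[Hn Hu Hi _ _].
apply/flatten_mapP; exists (size p); last exact: mem_words.
rewrite mem_iota; apply/andP; split; first by case: p Hn Hu Hi.
rewrite add1n ltnS; apply: uniq_leq_size => // v Hv.
exact: (allP Hi).
Qed.

Lemma spathP x y p : p \in spaths X x y ->
  exists s, [/\ p = x :: s, uniq (x :: s), inX (x :: s) & last x s = y].
Proof.
rewrite mem_filter => /andP[/and5P[Hn Hu Hi Hh Hl] _].
case: p Hn Hu Hi Hh Hl => // a s _ Hu Hi /eqP /= Hh /eqP Hl.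
by subst a; exists s.
Qed.

Lemma spath_cons x y s : inX (x :: s) -> uniq (x :: s) -> last x s = y ->
  is_spath X x y (x :: s).
Proof. by move=> Hi Hu Hl; apply/and5P; split => //=; rewrite Hl. Qed.

Definition pN (p : seq nat) : M -> M := if p is x :: s then pathN x s else id.

Definition fl (inx : nat -> M) (v : nat) : M :=
  msum X (fun x => msum (spaths X x v) (fun p => pN p (inx x))).

Lemma path_le_fl inx x s : x \in X -> inX (x :: s) ->
  pathN x s (inx x) ≼ fl inx (last x s).
Proof.
move=> Hx Hi; have [s' [Hu Hi' Hl Hle]] := shortcut Hi.
apply: le_trans (Hle _) _.
apply: le_trans _ (le_msum (fun x0 => msum (spaths X x0 (last x s)) (fun p => pN p (inx x0))) Hx).
rewrite -Hl.
have Hm : x :: s' \in spaths X x (last x s') by apply: spath_mem; apply: spath_cons.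
exact: (le_msum (fun p => pN p (inx x)) Hm).
Qed.

Lemma fl_flow inx : is_flow X E inx (fl inx).
Proof.
move=> v Hv; apply: fm_le_antisym.
- apply: msum_le => x Hx; apply: msum_le => p /spathP [s [-> Hu Hi Hl]] /=.
  case/lastP: s Hu Hi Hl => [|t w] Hu Hi Hl.
    by rewrite /= in Hl; subst x; apply: le_addr.
  rewrite last_rcons in Hl; subst w.
  rewrite pathN_rcons.
  have Ht : inX (x :: t) by move: Hi; rewrite -rcons_cons all_rcons => /andP[].
  have Hu' : last x t \in X by apply: (allP Ht); apply: mem_last.
  apply: le_trans (dist_mono (E_dist v Hu') (path_le_fl inx Hx Ht)) _.
  apply: le_trans (le_addl (inx v) _).
  exact: (le_msum (fun u => E u v (fl inx u))).
- apply: le_join.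
    have := @path_le_fl inx v [::] Hv; rewrite /= Hv; exact.
  apply: msum_le => u Hu; rewrite [fl inx u]/fl (dist_msum _ _ (E_dist v Hu)).
  apply: msum_le => x Hx; rewrite (dist_msum _ _ (E_dist v Hu)).
  apply: msum_le => p /spathP [s [-> _ Hi Hl]] /=.
  have := @path_le_fl inx x (rcons s v) Hx.
  rewrite last_rcons pathN_rcons Hl; apply.
  by rewrite -rcons_cons all_rcons Hv Hi.
Qed.

Lemma fl_least inx fl' : is_flow X E inx fl' -> forall v, v \in X -> fl inx v ≼ fl' v.
Proof.
move=> Hfl v Hv.
have L1 : forall x s m, inX (x :: s) -> m ≼ fl' x -> pathN x s m ≼ fl' (last x s).
  move=> x s; elim: s x => [|y s IH] x m /= /andP[Hx Hs] Hm //.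
  apply: IH => //.
  have Hy : y \in X by case/andP: Hs.
  rewrite (Hfl y Hy).
  apply: le_trans (dist_mono (E_dist y Hx) Hm) _.
  apply: le_trans (le_addl (inx y) _).
  exact: (le_msum (fun u => E u y (fl' u))).
apply: msum_le => x Hx; apply: msum_le => p /spathP [s [-> _ Hi <-]] /=.
apply: L1 => //; rewrite (Hfl x Hx); exact: le_addr.
Qed.

Lemma flow_eq inf v : v \in X -> flow X E inf v = fl (inflow_at X inf) v.
Proof.
move=> Hv.
have ex : exists f, is_least_flow X E (inflow_at X inf) f.
  by exists (fl (inflow_at X inf)); split; [apply: fl_flow | apply: fl_least].
have [H1 H2] := epsilon_spec (inhabits (fun _ => z0)) _ ex.
rewrite /flow; apply: fm_le_antisym.
- by apply: H2 => //; apply: fl_flow.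
- by apply: fl_least.
Qed.

Lemma partA inf y z : y \in X ->
  tf X E inf y z =
  msum (X : seq nat) (fun x =>
    msum (spaths X x y) (fun p => pathf E p z (inflow_at X inf x))).
Proof.
move=> Hy; rewrite /tf flow_eq // /fl (dist_msum _ _ (E_dist z Hy)).
apply: msum_eq_in => x Hx /=; rewrite (dist_msum _ _ (E_dist z Hy)).
apply: msum_eq_in => p /spathP [s [-> _ _ Hl]] /=.
by rewrite pathf_fromE Hl.
Qed.

Lemma pathf_le_spaths x s y z m : inX (x :: s) -> last x s = y ->
  pathf_from E x s z m ≼ msum (spaths X x y) (fun q => pathf E q z m).
Proof.
move=> Hi Hl; have [s' [Hu Hi' Hl' Hle]] := shortcut Hi.
have Hy : y \in X by rewrite -Hl; apply: (allP Hi); apply: mem_last.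
apply: le_trans _ (le_msum (fun q => pathf E q z m) (spath_mem (spath_cons Hi' Hu _))); last first.
  by rewrite Hl' Hl.
rewrite /= !pathf_fromE Hl' Hl; exact: dist_mono (E_dist z Hy) (Hle m).
Qed.

End Graph.
Lemma msum_single (s : seq nat) (z : nat) (b : bool) (m : M) :
  msum s (fun a => if (a == z) && b then m else z0) = if (z \in s) && b then m else z0.
Proof.
case: b; elim: s => [|a s IH] //=; rewrite IH ?andbT ?andbF ?fm_add0 //.
by rewrite inE (eq_sym z a); case: (a == z); case: (z \in s);
  rewrite /= ?fm_add0 ?Hidem ?addm0.
Qed.

Lemma inflow_single (X : {fset nat}) (z x : nat) (m : M) w : z \notin X ->
  inflow_at X (fun a b => if (a == z) && (b == x) then m else z0) w =
  if w == x then m else z0.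
Proof.
move=> Hz; rewrite /inflow_at; apply: lub_eq.
set v := if w == x then m else z0.
have Hc : forall n, msum [seq a <- iota 0 n | a \notin X]
     (fun a => if (a == z) && (w == x) then m else z0) = if z < n then v else z0.
  move=> n; rewrite msum_single mem_filter Hz mem_iota /= /v.
  by case: (z < n); case: (w == x).
split.
- move=> i; rewrite Hc; case: (z < i); [exact: le_refl | exact: le0].
- move=> u Hu; have := Hu z.+1; by rewrite Hc ltnSn.
Qed.

Lemma tf_spr (X : {fset nat}) (E1 E2 : nat -> nat -> M -> M) : good_edges X E1 -> good_edges X E2 ->
  tf_equal X E1 E2 -> spr X E1 E2.
Proof.
move=> G1 G2 Htf x y z [Hx _] Hy Hz p Hp.
exists (spaths X x y); split; first exact: filter_all.
move=> m.
set inf := fun a b => if (a == z) && (b == x) then m else z0.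
have Hin : forall w, inflow_at X inf w = if w == x then m else z0 by move=> w; apply: inflow_single.
have := Htf inf y z Hy Hz; rewrite (partA G1) // (partA G2) // => Heq.
apply: le_trans (le_msum (fun q => pathf E1 q z m) (spath_mem Hp)) _.
apply: le_trans (_ : _ ≼ msum (X : seq nat) (fun x0 => msum (spaths X x0 y)
   (fun q => pathf E1 q z (inflow_at X inf x0)))) _.
  have := le_msum (fun x0 => msum (spaths X x0 y)
   (fun q => pathf E1 q z (inflow_at X inf x0))) Hx.
  by rewrite /= Hin eqxx.
rewrite Heq; apply: msum_le => x0 Hx0; rewrite Hin.
case: eqP => [->|_]; first exact: le_refl.
apply: msum_le => q /spathP [s [-> _ Hi _]] /=.
rewrite pathf_fromE (pathN_zero G2) //.
have Hl : last x0 s \in X by apply: (allP Hi); apply: mem_last.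
by have [_ ->] := E_dist G2 z Hl; apply: le0.
Qed.

Lemma spr_path (X : {fset nat}) (E1 E2 : nat -> nat -> M -> M) y z : good_edges X E1 -> good_edges X E2 ->
  spr X E1 E2 -> y \in X -> z \notin X ->
  forall s x m, all (fun v => v \in X) (x :: s) -> uniq (x :: s) -> last x s = y ->
  pathf_from E1 x s z m ≼ msum (spaths X x y) (fun q => pathf E2 q z m).
Proof.
move=> G1 G2 Hspr Hy Hz.
have Hout : forall s x m, all (fun v => v \in X) (x :: s) -> uniq (x :: s) -> last x s = y ->
    (exists w, E1 x w <> E2 x w) ->
    pathf_from E1 x s z m ≼ msum (spaths X x y) (fun q => pathf E2 q z m).
  move=> s x m Hi Hu Hl Hex.
  have Hx : x \in X by case/andP: Hi.
  have [P [HP HPle]] := Hspr x y z (conj Hx Hex) Hy Hz (x :: s) (spath_cons Hi Hu Hl).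
  apply: le_trans (HPle m) _; apply: msum_sub => q Hq.
  by apply: spath_mem; apply: (allP HP).
elim=> [|x1 s IH] x m Hi Hu Hl.
  case: (classic (exists w, E1 x w <> E2 x w)) => [H|H]; first exact: Hout.
  have Heq : E1 x z = E2 x z by apply: NNPP => ne; apply: H; exists z.
  rewrite /= Heq; rewrite /= in Hl.
  have := pathf_le_spaths G2 (s := [::]) z m Hi Hl; exact.
case: (classic (exists w, E1 x w <> E2 x w)) => [H|H]; first exact: Hout.
have Heq : E1 x x1 = E2 x x1 by apply: NNPP => ne; apply: H; exists x1.
rewrite /= Heq.
have Hi' : all (fun v => v \in X) (x1 :: s) by case/andP: Hi.
have Hu' : uniq (x1 :: s) by case/andP: Hu.
apply: le_trans (IH x1 (E2 x x1 m) Hi' Hu' Hl) _.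
apply: msum_le => q /spathP [t [-> _ Hit Hlt]].
have Hx : x \in X by case/andP: Hi.
have := pathf_le_spaths G2 (x := x) (s := x1 :: t) z m _ Hlt.
by rewrite /= Hx; apply.
Qed.

Lemma tf_le (X : {fset nat}) (E1 E2 : nat -> nat -> M -> M) inf y z : good_edges X E1 -> good_edges X E2 ->
  spr X E1 E2 -> y \in X -> z \notin X -> tf X E1 inf y z ≼ tf X E2 inf y z.
Proof.
move=> G1 G2 Hspr Hy Hz; rewrite (partA G1) // (partA G2) //.
apply: msum_le => x Hx; apply: msum_le => p /spathP [s [-> Hu Hi Hl]].
apply: le_trans (spr_path G1 G2 Hspr Hy Hz (inflow_at X inf x) Hi Hu Hl) _.
exact: (le_msum (fun x0 => msum (spaths X x0 y)
   (fun q => pathf E2 q z (inflow_at X inf x0))) Hx).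
Qed.

End Aux.

Theorem theorem5 (M : flowMonoid) (Hidem : idempotent_add M) :
  (* (a) *)
  (forall (X : {fset nat}) (E : nat -> nat -> M -> M),
     good_edges X E ->
     forall (inf : nat -> nat -> M) (y z : nat), y \in X -> z \notin X ->
       tf X E inf y z =
       msum (X : seq nat) (fun x =>
         msum (spaths X x y) (fun p => pathf E p z (inflow_at X inf x))))
  /\
  (* (b) *)
  (forall (X : {fset nat}) (E1 E2 : nat -> nat -> M -> M),
     good_edges X E1 -> good_edges X E2 ->
     (tf_equal X E1 E2 <-> spr X E1 E2 /\ spr X E2 E1)).
Proof.
split.
  by move=> X E HE inf y z Hy _; apply: partA.
move=> X E1 E2 G1 G2; split.
  move=> Htf; split; first by have T := tf_spr Hidem G1 G2 Htf; exact T.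
  apply: (tf_spr Hidem G2 G1) => inf y z Hy Hz; symmetry; exact: Htf.
move=> [S12 S21] inf y z Hy Hz; apply: fm_le_antisym.
  exact: (tf_le Hidem inf G1 G2 S12 Hy Hz).
exact: (tf_le Hidem inf G2 G1 S21 Hy Hz).
Qed.
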